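(* Let $n$ be a positive integer. Then, as $m\to\infty$ through the positive integers, \[ \sum_{k = 1}^{m} (-1)^{k-1} \binom{m}{k} \frac{1}{k^{n}} = \frac{\log^{n}{m}}{n!} + \frac{\gamma\log^{n-1}{m}}{(n-1)!} + O(\log^{n-2}{m}). \]
   Context: $\gamma$ is the Euler--Mascheroni constant. *)

(* Defs.v *)
From Stdlib Require Import Reals Lra.
From Coquelicot Require Import Coquelicot.
Open Scope R_scope.

Definition harmonic (m : nat) : R := sum_n_m (fun k => / INR k) 1 m.

Definition euler_gamma : R :=
  real (Lim_seq (fun m => harmonic m - ln (INR m))).

Definition alt_binom_sum (n m : nat) : R :=
  sum_n_m (fun k => (-1) ^ (k - 1) * Binomial.C m k / INR k ^ n) 1 m.

(* Main.v *)
Require Import Defs.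
From Stdlib Require Import Reals Arith Factorial Lra Lia.
From Coquelicot Require Import Coquelicot.
Open Scope R_scope.

Lemma Rplus_plus (x y : R) : plus x y = x + y.
Proof. reflexivity. Qed.

Lemma C_shift (m j : nat) : (j <= m)%nat ->
  Binomial.C m j / INR (S j) = Binomial.C (S m) (S j) / INR (S m).
Proof.
  intros H. unfold Binomial.C.
  replace (S m - S j)%nat with (m - j)%nat by lia.
  rewrite !fact_simpl, !mult_INR.
  assert (INR (fact m) <> 0) by apply INR_fact_neq_0.
  assert (INR (fact j) <> 0) by apply INR_fact_neq_0.
  assert (INR (fact (m-j)) <> 0) by apply INR_fact_neq_0.
  assert (INR (S j) <> 0) by (apply not_0_INR; lia).
  assert (INR (S m) <> 0) by (apply not_0_INR; lia).
  field. repeat split; auto.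
Qed.

Lemma sumSm (a : nat -> R) m : sum_n_m a 1 (S m) = sum_n_m a 1 m + a (S m).
Proof. rewrite sum_n_Sm by lia. reflexivity. Qed.
Lemma sumplus (a b : nat -> R) n m : sum_n_m (fun k => a k + b k) n m = sum_n_m a n m + sum_n_m b n m.
Proof. apply (sum_n_m_plus a b). Qed.
Lemma summult (c : R) (a : nat -> R) n m : sum_n_m (fun k => c * a k) n m = c * sum_n_m a n m.
Proof. apply (sum_n_m_mult_l c a). Qed.
Lemma sumext (a b : nat -> R) n m : (forall k, (n <= k <= m)%nat -> a k = b k) -> sum_n_m a n m = sum_n_m b n m.
Proof. apply sum_n_m_ext_loc. Qed.

Lemma alt_step (n m : nat) :
  alt_binom_sum (S n) (S m) = alt_binom_sum (S n) m + alt_binom_sum n (S m) / INR (S m).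
Proof.
  unfold alt_binom_sum.
  rewrite sumSm.
  set (h := fun k => (-1) ^ (k - 1) * Binomial.C m (k - 1) / INR k ^ S n).
  rewrite (sumext _ (fun k => ((-1) ^ (k - 1) * Binomial.C m k / INR k ^ S n) + (h k))).
  2:{ intros k Hk. unfold h.
      destruct k as [|j]; [lia|].
      rewrite <- (pascal m j) by lia. simpl (S j - 1)%nat. rewrite Nat.sub_0_r. field.
      apply pow_nonzero, not_0_INR; lia. }
  rewrite sumplus.
  assert (E: (-1) ^ (S m - 1) * Binomial.C (S m) (S m) / INR (S m) ^ S n = h (S m)).
  { unfold h. rewrite !C_n_n. simpl (S m - 1)%nat. rewrite Nat.sub_0_r, C_n_n. reflexivity. }
  rewrite E, Rplus_assoc, <- sumSm. f_equal.
  match goal with |- _ = ?s / ?d => transitivity (/ d * s); [|change (@eq R (/ d * s) (s / d)); unfold Rdiv; ring] end. rewrite <- summult. apply sumext. intros k Hk.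
  unfold h. destruct k as [|j]; [lia|].
  simpl (S j - 1)%nat. rewrite Nat.sub_0_r.
  assert (INR (S j) <> 0) by (apply not_0_INR; lia).
  assert (INR (S m) <> 0) by (apply not_0_INR; lia).
  assert (HC := C_shift m j ltac:(lia)).
  replace (Binomial.C m j) with (Binomial.C (S m) (S j) / INR (S m) * INR (S j)).
  2:{ rewrite <- HC. field. auto. }
  change (INR (S j) ^ S n) with (INR (S j) * INR (S j) ^ n). match goal with |- ?a = ?b => change (@eq R a b) end. field. split; auto. apply pow_nonzero; auto.
Qed.

Lemma alt0 (m : nat) : alt_binom_sum 0 (S m) = 1.
Proof.
  set (g := fun i => Binomial.C (S m) i * (-1) ^ i * 1 ^ (S m - i)).
  assert (H0 : sum_n_m g 0 (S m) = 0).
  { change (sum_n g (S m) = 0). rewrite sum_n_Reals. unfold g. rewrite <- binomial.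
    replace (-1 + 1) with 0 by ring. apply pow_ne_zero. lia. }
  assert (H1 : sum_n_m g 0 (S m) = g 0%nat + sum_n_m g 1 (S m)).
  { rewrite sum_Sn_m by lia. reflexivity. }
  assert (H2 : sum_n_m g 1 (S m) = - alt_binom_sum 0 (S m)).
  { rewrite <- (Rmult_1_l (alt_binom_sum _ _)).
    unfold alt_binom_sum. rewrite Ropp_mult_distr_l, <- summult.
    apply sumext. intros k Hk. unfold g. destruct k as [|j]; [lia|].
    simpl (S j - 1)%nat. rewrite Nat.sub_0_r, pow1. simpl pow.
    match goal with |- ?a = ?b => change (@eq R a b) end. field. }
  assert (g 0%nat = 1). { unfold g. rewrite C_n_0, pow1. simpl. ring. }
  lra.
Qed.

Lemma harm0 : harmonic 0 = 0.
Proof. unfold harmonic. rewrite sum_n_m_zero by lia. reflexivity. Qed.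

Lemma harmS m : harmonic (S m) = harmonic m + / INR (S m).
Proof. unfold harmonic. apply sumSm. Qed.

Lemma alt_0m n : alt_binom_sum n 0 = 0.
Proof. unfold alt_binom_sum. rewrite sum_n_m_zero by lia. reflexivity. Qed.

Lemma alt1 m : alt_binom_sum 1 m = harmonic m.
Proof.
  induction m. rewrite alt_0m, harm0; auto.
  rewrite alt_step, alt0, harmS, IHm. unfold Rdiv. ring.
Qed.

Lemma pow_diff (a b : R) (k : nat) : 0 <= b <= a ->
  INR (S k) * (a - b) * b ^ k <= a ^ S k - b ^ S k <= INR (S k) * (a - b) * a ^ k.
Proof.
  intros [Hb Hab]. induction k.
  - simpl. lra.
  - assert (Hbk : b ^ S k <= a ^ S k) by (apply pow_incr; lra).
    assert (0 <= b ^ k) by (apply pow_le; lra).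
    assert (0 <= b ^ S k) by (apply pow_le; lra).
    rewrite (S_INR (S k)). simpl pow in *.
    destruct IHk as [I1 I2]. split.
    + assert (a * (INR (S k) * (a - b) * b ^ k) <= a * (a * a ^ k - b * b ^ k))
        by (apply Rmult_le_compat_l; lra).
      assert (b * (INR (S k) * (a - b) * b ^ k) <= a * (INR (S k) * (a - b) * b ^ k)).
      { apply Rmult_le_compat_r; [|lra]. apply Rmult_le_pos; [|lra].
        apply Rmult_le_pos; [apply pos_INR|lra]. }
      rewrite S_INR in *. nra.
    + assert (a * (a * a ^ k - b * b ^ k) <= a * (INR (S k) * (a - b) * a ^ k))
        by (apply Rmult_le_compat_l; lra).
      rewrite S_INR in *. nra.
Qed.

Lemma harm_nonneg m : 0 <= harmonic m.
Proof.
  induction m. rewrite harm0; lra.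
  rewrite harmS. assert (0 < / INR (S m)) by (apply Rinv_0_lt_compat, lt_0_INR; lia). lra.
Qed.

Lemma fact_pos n : 0 < INR (fact n).
Proof. apply lt_0_INR, lt_O_fact. Qed.

Lemma fact_S_R n : INR (fact (S n)) = INR (S n) * INR (fact n).
Proof. rewrite fact_simpl, mult_INR. reflexivity. Qed.

Lemma alt_lower n m : harmonic m ^ S n / INR (fact (S n)) <= alt_binom_sum (S n) m.
Proof.
  revert m. induction n as [|n IHn]; intro m; induction m as [|m IHm].
  - rewrite harm0, alt_0m. simpl. lra.
  - rewrite alt1. simpl. lra.
  - rewrite harm0, alt_0m. simpl pow. rewrite Rmult_0_l. unfold Rdiv. lra.
  - rewrite alt_step.
    assert (Hn := IHn (S m)).
    set (a := harmonic (S m)) in *. set (b := harmonic m) in *.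
    assert (Ha : a = b + / INR (S m)) by (unfold a, b; apply harmS).
    assert (Ht : 0 < / INR (S m)) by (apply Rinv_0_lt_compat, lt_0_INR; lia).
    assert (Hb : 0 <= b) by apply harm_nonneg.
    destruct (pow_diff a b (S n) ltac:(lra)) as [_ P].
    set (t := / INR (S m)) in *.
    set (F := INR (fact (S n))) in *.
    assert (HF : 0 < F) by apply fact_pos.
    rewrite fact_S_R. fold F.
    assert (HS : 0 < INR (S (S n))) by (apply lt_0_INR; lia).
    set (N := INR (S (S n))) in *.
    unfold Rdiv. fold t.
    assert (E1 : a ^ S (S n) * / (N * F) <= b ^ S (S n) * / (N * F) + t * (a ^ S n / F)).
    { replace (t * (a ^ S n / F)) with ((N * (a - b) * a ^ S n) * / (N * F)).
      2:{ rewrite Ha. field. lra. }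
      rewrite <- Rmult_plus_distr_r. apply Rmult_le_compat_r.
      - apply Rlt_le, Rinv_0_lt_compat, Rmult_lt_0_compat; lra.
      - lra. }
    assert (E2 : t * (a ^ S n / F) <= t * alt_binom_sum (S n) (S m)).
    { apply Rmult_le_compat_l; lra. }
    assert (IHm' : b ^ S (S n) * / (N * F) <= alt_binom_sum (S (S n)) m).
    { unfold N, F. rewrite <- fact_S_R. exact IHm. }
    nra.
Qed.

Fixpoint wsum (m : nat) : R := match m with O => 0 | S p => wsum p + / INR (S p) ^ 2 end.

Lemma wsum_nonneg m : 0 <= wsum m.
Proof.
  induction m. simpl; lra. change (wsum (S m)) with (wsum m + / INR (S m) ^ 2).
  assert (0 < / INR (S m) ^ 2) by (apply Rinv_0_lt_compat, pow_lt, lt_0_INR; lia). lra.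
Qed.

Lemma wsum_le2 m : wsum m <= 2.
Proof.
  assert (forall m, wsum (S m) <= 2 - / INR (S m)).
  { induction m0.
    - simpl. lra.
    - change (wsum (S (S m0))) with (wsum (S m0) + / INR (S (S m0)) ^ 2).
      assert (HA : 1 <= INR (S m0)) by (apply (le_INR 1); lia).
      rewrite (S_INR (S m0)).
      set (x := INR (S m0)) in *.
      assert (/ (x+1)^2 <= / x - / (x+1)).
      { apply (Rmult_le_reg_r (x * (x+1)^2)). nra.
        field_simplify; try lra. }
      lra. }
  destruct m. simpl; lra.
  assert (0 < / INR (S m)) by (apply Rinv_0_lt_compat, lt_0_INR; lia).
  specialize (H m). lra.
Qed.

Lemma alt_upper_gen (k : nat) (V : nat -> R)
  (Vmono : forall m, V m <= V (S m))
  (hyp : forall j, alt_binom_sum (S k) (S j) <= harmonic (S j) ^ S k / INR (fact (S k)) + V (S j)) :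
  forall m, alt_binom_sum (S (S k)) m <=
    harmonic m ^ S (S k) / INR (fact (S (S k)))
    + (harmonic m + 1) ^ k * wsum m / INR (fact k) + V m * harmonic m.
Proof.
  induction m as [|m IHm].
  - rewrite alt_0m, harm0. simpl wsum. simpl pow. unfold Rdiv. rewrite !Rmult_0_l, !Rmult_0_r. lra.
  - rewrite alt_step.
    assert (Hh := hyp m).
    set (a := harmonic (S m)) in *. set (b := harmonic m) in *.
    assert (Ha : a = b + / INR (S m)) by (unfold a, b; apply harmS).
    assert (Ht : 0 < / INR (S m)) by (apply Rinv_0_lt_compat, lt_0_INR; lia).
    assert (Hb : 0 <= b) by apply harm_nonneg.
    change (wsum (S m)) with (wsum m + / INR (S m) ^ 2).
    assert (Hw := wsum_nonneg m).
    destruct (pow_diff a b k ltac:(lra)) as [_ P1].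
    destruct (pow_diff a b (S k) ltac:(lra)) as [P2 _].
    assert (Q1 : (b + 1) ^ k <= (a + 1) ^ k) by (apply pow_incr; lra).
    assert (Q2 : a ^ k <= (a + 1) ^ k) by (apply pow_incr; lra).
    assert (Q0 : 0 <= a ^ k) by (apply pow_le; lra).
    assert (Vm := Vmono m).
    set (t := / INR (S m)) in *.
    set (wm := wsum m) in *.
    assert (HF : 0 < INR (fact k)) by apply fact_pos.
    rewrite !fact_S_R in *.
    set (F := INR (fact k)) in *.
    set (N1 := INR (S k)) in *. set (N2 := INR (S (S k))) in *.
    assert (HN1 : 0 < N1) by (apply lt_0_INR; lia).
    assert (HN2 : 0 < N2) by (apply lt_0_INR; lia).
    replace (alt_binom_sum (S k) (S m) / INR (S m)) with (t * alt_binom_sum (S k) (S m)) by (unfold t, Rdiv; ring).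
    assert (E1 : t * alt_binom_sum (S k) (S m) <= t * (a ^ S k / (N1 * F)) + t * V (S m)).
    { rewrite <- Rmult_plus_distr_l. apply Rmult_le_compat_l; lra. }
    assert (E2 : t * (a ^ S k / (N1 * F)) <= t * (b ^ S k / (N1 * F)) + t ^ 2 * a ^ k / F).
    { replace (t * (a ^ S k / (N1 * F))) with (t * (a ^ S k - b ^ S k) / (N1 * F) + t * (b ^ S k / (N1 * F))) by (field; lra).
      assert (t * (a ^ S k - b ^ S k) <= t * (N1 * t * a ^ k)).
      { apply Rmult_le_compat_l; [lra|]. replace t with (a - b) by lra. exact P1. }
      assert (t * (a ^ S k - b ^ S k) / (N1 * F) <= t * (N1 * t * a ^ k) / (N1 * F)).
      { unfold Rdiv. apply Rmult_le_compat_r; [|lra]. apply Rlt_le, Rinv_0_lt_compat, Rmult_lt_0_compat; lra. }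
      replace (t * (N1 * t * a ^ k) / (N1 * F)) with (t ^ 2 * a ^ k / F) in H0 by (field; lra).
      lra. }
    assert (E3 : t * (b ^ S k / (N1 * F)) <= a ^ S (S k) / (N2 * (N1 * F)) - b ^ S (S k) / (N2 * (N1 * F))).
    { replace (a ^ S (S k) / (N2 * (N1 * F)) - b ^ S (S k) / (N2 * (N1 * F)))
        with ((a ^ S (S k) - b ^ S (S k)) / (N2 * (N1 * F))) by (field; lra).
      replace (t * (b ^ S k / (N1 * F))) with ((N2 * (a - b) * b ^ S k) / (N2 * (N1 * F))).
      2:{ replace (a - b) with t by lra. field. lra. }
      unfold Rdiv. apply Rmult_le_compat_r; [|lra]. apply Rlt_le, Rinv_0_lt_compat, Rmult_lt_0_compat; [lra|]. apply Rmult_lt_0_compat; lra. }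
    assert (E4 : t ^ 2 * a ^ k / F <= ((a + 1) ^ k * (wm + t ^ 2) - (b + 1) ^ k * wm) / F).
    { unfold Rdiv. apply Rmult_le_compat_r; [apply Rlt_le, Rinv_0_lt_compat; lra|].
      assert (0 <= t ^ 2) by (apply pow_le; lra).
      assert ((b + 1) ^ k * wm <= (a + 1) ^ k * wm) by (apply Rmult_le_compat_r; lra).
      assert (t ^ 2 * a ^ k <= t ^ 2 * (a + 1) ^ k) by (apply Rmult_le_compat_l; lra).
      lra. }
    assert (E5 : t * V (S m) <= V (S m) * a - V m * b).
    { assert (V m * b <= V (S m) * b) by (apply Rmult_le_compat_r; lra).
      replace (t * V (S m)) with (V (S m) * a - V (S m) * b) by (rewrite Ha; unfold t; ring). lra. }
    assert (Et : / INR (S m) ^ 2 = t ^ 2) by (unfold t; rewrite pow_inv; reflexivity).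
    rewrite Et.
    assert (Ediv : forall x y, x / F - y / F = (x - y) / F) by (intros; field; lra).
    rewrite <- Ediv in E4.
    lra.
Qed.

Lemma harm_mono m : harmonic m <= harmonic (S m).
Proof. rewrite harmS. assert (0 < / INR (S m)) by (apply Rinv_0_lt_compat, lt_0_INR; lia). lra. Qed.

Lemma fact_ge1 n : 1 <= INR (fact n).
Proof. apply (le_INR 1). apply lt_O_fact. Qed.

Lemma alt_upper k : exists G, 0 <= G /\ forall m,
  alt_binom_sum (S (S k)) m <= harmonic m ^ S (S k) / INR (fact (S (S k))) + G * (harmonic m + 1) ^ k.
Proof.
  induction k as [|k [G [HG IH]]].
  - exists 2. split. lra. intro m.
    assert (H := alt_upper_gen 0 (fun _ => 0) (fun _ => Rle_refl 0)).
    assert (H' : forall j, alt_binom_sum 1 (S j) <= harmonic (S j) ^ 1 / INR (fact 1) + 0).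
    { intro j. rewrite alt1. simpl. lra. }
    specialize (H H' m). simpl pow in *. simpl fact in H. simpl INR in H.
    assert (Hw := wsum_le2 m). simpl in H |- *. lra.
  - exists (2 + G). split. lra. intro m.
    assert (Vmono : forall m, G * (harmonic m + 1) ^ k <= G * (harmonic (S m) + 1) ^ k).
    { intro p. apply Rmult_le_compat_l; auto. apply pow_incr.
      pose proof (harm_nonneg p). pose proof (harm_mono p). lra. }
    assert (H := alt_upper_gen (S k) _ Vmono (fun j => IH (S j)) m).
    set (h := harmonic m) in *.
    assert (Hh : 0 <= h) by apply harm_nonneg.
    assert (Hw := wsum_le2 m). assert (Hw0 := wsum_nonneg m).
    assert (HF := fact_ge1 (S k)).
    assert (HP : 0 <= (h + 1) ^ S k) by (apply pow_le; lra).
    assert (HPk : 0 <= (h + 1) ^ k) by (apply pow_le; lra).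
    assert (E1 : (h + 1) ^ S k * wsum m / INR (fact (S k)) <= 2 * (h + 1) ^ S k).
    { apply (Rmult_le_reg_r (INR (fact (S k)))). lra.
      unfold Rdiv. rewrite Rmult_assoc, Rinv_l by lra.
      assert ((h + 1) ^ S k * wsum m <= (h + 1) ^ S k * 2) by (apply Rmult_le_compat_l; lra).
      assert (2 * (h + 1) ^ S k * 1 <= 2 * (h + 1) ^ S k * INR (fact (S k))) by
        (apply Rmult_le_compat_l; lra). lra. }
    assert (E2 : G * (h + 1) ^ k * h <= G * (h + 1) ^ S k).
    { simpl pow. assert (G * (h+1)^k * h <= G * (h+1)^k * (h+1)) by (apply Rmult_le_compat_l; [apply Rmult_le_pos|]; lra).
      lra. }
    cbv beta in H. fold h in H. lra.
Qed.

Lemma ln_le_sub1 x : 0 < x -> ln x <= x - 1.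
Proof.
  intro Hx. destruct (Req_dec (ln x) 0) as [E|E].
  - rewrite E. destruct (Rle_dec 1 x). lra. exfalso.
    assert (ln x < 0) by (rewrite <- ln_1; apply ln_increasing; lra). lra.
  - pose proof (exp_ineq1 _ E). rewrite exp_ln in H by lra. lra.
Qed.

Definition dseq (m : nat) : R := harmonic (S m) - ln (INR (S m)).
Definition vseq (m : nat) : R := dseq m - / INR (S m).

Lemma dseq_decr m : dseq (S m) <= dseq m.
Proof.
  unfold dseq. rewrite (harmS (S m)).
  assert (Hp : 0 < INR (S m)) by (apply lt_0_INR; lia).
  assert (Hq : 0 < INR (S (S m))) by (apply lt_0_INR; lia).
  assert (L := ln_le_sub1 (INR (S m) / INR (S (S m))) ltac:(apply Rdiv_lt_0_compat; lra)).
  rewrite ln_div in L by lra.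
  replace (INR (S m) / INR (S (S m)) - 1) with (- / INR (S (S m))) in L.
  2:{ rewrite (S_INR (S m)). field. lra. }
  lra.
Qed.

Lemma vseq_incr m : vseq m <= vseq (S m).
Proof.
  unfold vseq, dseq. rewrite (harmS (S m)).
  assert (Hp : 0 < INR (S m)) by (apply lt_0_INR; lia).
  assert (Hq : 0 < INR (S (S m))) by (apply lt_0_INR; lia).
  assert (L := ln_le_sub1 (INR (S (S m)) / INR (S m)) ltac:(apply Rdiv_lt_0_compat; lra)).
  rewrite ln_div in L by lra.
  replace (INR (S (S m)) / INR (S m) - 1) with (/ INR (S m)) in L.
  2:{ rewrite (S_INR (S m)). field. lra. }
  lra.
Qed.

Lemma vseq_le_dseq m : vseq m <= dseq m.
Proof. unfold vseq. assert (0 < / INR (S m)) by (apply Rinv_0_lt_compat, lt_0_INR; lia). lra. Qed.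

Lemma vseq_mono n p : vseq n <= vseq (p + n).
Proof. induction p. simpl; lra. pose proof (vseq_incr (p + n)). simpl. lra. Qed.

Lemma gamma_bounds m : 0 <= dseq m - euler_gamma <= / INR (S m).
Proof.
  assert (Hv0 : vseq 0 = 0).
  { unfold vseq, dseq. rewrite harmS, harm0. simpl INR. rewrite ln_1. field. }
  assert (Hex : ex_finite_lim_seq dseq).
  { apply (ex_finite_lim_seq_decr _ 0). apply dseq_decr.
    intro n. rewrite <- Hv0. pose proof (vseq_mono 0 n). rewrite Nat.add_0_r in H.
    pose proof (vseq_le_dseq n). lra. }
  destruct Hex as [l Hl].
  assert (Eg : euler_gamma = l).
  { unfold euler_gamma.
    rewrite <- (Lim_seq_incr_1 (fun m => harmonic m - ln (INR m))).
    change (Lim_seq (fun n => harmonic (S n) - ln (INR (S n)))) with (Lim_seq dseq).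
    rewrite (is_lim_seq_unique _ _ Hl). reflexivity. }
  rewrite Eg. split.
  - pose proof (is_lim_seq_decr_compare dseq l Hl dseq_decr m). lra.
  - assert (Rbar_le (vseq m) l).
    { apply (is_lim_seq_le (fun _ => vseq m) (fun n => dseq (n + m))).
      + intro n. pose proof (vseq_mono m n). pose proof (vseq_le_dseq (n + m)). lra.
      + apply is_lim_seq_const.
      + apply (is_lim_seq_incr_n dseq m l). exact Hl. }
    simpl in H. unfold vseq in H. lra.
Qed.

Lemma expand k : exists K, 0 <= K /\ forall L g, 1 <= L -> 0 <= g <= 2 ->
  Rabs ((L + g) ^ S (S k) - L ^ S (S k) - INR (S (S k)) * g * L ^ S k) <= K * L ^ k.
Proof.
  induction k as [|k [K [HK IH]]].
  - exists 4. split. lra. intros L g HL Hg. simpl.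
    replace ((L + g) * ((L + g) * 1) - L * (L * 1) - (1 + 1) * g * (L * 1)) with (g * g) by ring.
    rewrite Rabs_pos_eq by nra. nra.
  - exists (3 * K + 4 * INR (S (S k))). split.
    { pose proof (pos_INR (S (S k))). lra. }
    intros L g HL Hg. specialize (IH L g HL Hg).
    set (R0 := (L + g) ^ S (S k) - L ^ S (S k) - INR (S (S k)) * g * L ^ S k) in *.
    replace ((L + g) ^ S (S (S k)) - L ^ S (S (S k)) - INR (S (S (S k))) * g * L ^ S (S k))
      with ((L + g) * R0 + INR (S (S k)) * (g * g) * L ^ S k).
    2:{ unfold R0. rewrite (S_INR (S (S k))). simpl pow. ring. }
    assert (HLk : 0 <= L ^ k) by (apply pow_le; lra).
    assert (HN : 0 <= INR (S (S k))) by apply pos_INR.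
    eapply Rle_trans. apply Rabs_triang.
    rewrite Rabs_mult, (Rabs_pos_eq (L + g)) by lra.
    rewrite (Rabs_pos_eq (INR (S (S k)) * (g * g) * L ^ S k)).
    2:{ apply Rmult_le_pos. apply Rmult_le_pos; nra. simpl; nra. }
    assert (A1 : (L + g) * Rabs R0 <= (3 * L) * (K * L ^ k)).
    { apply Rmult_le_compat; try lra. apply Rabs_pos. }
    assert (A2 : INR (S (S k)) * (g * g) <= INR (S (S k)) * 4) by (apply Rmult_le_compat_l; nra).
    assert (A3 : INR (S (S k)) * (g * g) * L ^ S k <= INR (S (S k)) * 4 * L ^ S k).
    { apply Rmult_le_compat_r; [simpl; nra|lra]. }
    simpl pow in *. nra.
Qed.

Theorem corollary1 (n : nat) (hn : (1 <= n)%nat) :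
  exists C M : R, forall m : nat, (1 <= m)%nat -> M <= INR m ->
    Rabs (alt_binom_sum n m
          - (ln (INR m)) ^ n / INR (fact n)
          - euler_gamma * (ln (INR m)) ^ (n - 1) / INR (fact (n - 1)))
    <= C * powerRZ (ln (INR m)) (Z.of_nat n - 2).
Proof.
  assert (G0 := gamma_bounds 0).
  assert (Hd0 : dseq 0 = 1).
  { unfold dseq. rewrite harmS, harm0. simpl INR. rewrite ln_1. field. }
  rewrite Hd0 in G0. simpl INR in G0. rewrite Rinv_1 in G0.
  assert (Common : forall m, (1 <= m)%nat -> exp 1 <= INR m ->
     1 <= ln (INR m) /\ ln (INR m) <= INR m /\
     0 <= harmonic m - ln (INR m) - euler_gamma <= / INR m).
  { intros m Hm HM. assert (Hp : 0 < INR m) by (apply lt_0_INR; lia).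
    split. { rewrite <- (ln_exp 1). apply ln_le; auto. apply exp_pos. }
    split. { pose proof (ln_le_sub1 _ Hp). lra. }
    destruct m as [|p]; [lia|]. apply (gamma_bounds p). }
  destruct n as [|[|k]]; [lia| |].
  - exists 1, (exp 1). intros m Hm HM.
    destruct (Common m Hm HM) as [HL [HLm He]].
    rewrite alt1. simpl pow. simpl fact. simpl INR.
    change (Z.of_nat 1 - 2)%Z with (-1)%Z. simpl powerRZ.
    replace (harmonic m - ln (INR m) * 1 / 1 - euler_gamma * 1 / 1)
      with (harmonic m - ln (INR m) - euler_gamma) by field.
    rewrite Rabs_pos_eq by lra. rewrite Rmult_1_r, Rmult_1_l.
    eapply Rle_trans. apply He. apply Rinv_le_contravar; lra.
  - destruct (alt_upper k) as [G [HG HU]].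
    destruct (expand k) as [K [HK HE]].
    exists (G * 4 ^ k + K + 1), (exp 1). intros m Hm HM.
    destruct (Common m Hm HM) as [HL [HLm He]].
    replace (Z.of_nat (S (S k)) - 2)%Z with (Z.of_nat k) by lia.
    rewrite <- pow_powerRZ.
    replace (S (S k) - 1)%nat with (S k) by lia.
    set (L := ln (INR m)) in *.
    set (H := harmonic m) in *.
    set (gam := euler_gamma) in *.
    set (eps := H - L - gam) in *.
    set (g := gam + eps).
    assert (Hg : 0 <= g <= 2).
    { assert (/ INR m <= 1). { rewrite <- Rinv_1. apply Rinv_le_contravar. lra. apply (le_INR 1); lia. }
      unfold g. lra. }
    assert (HHg : H = L + g) by (unfold g, eps; ring).
    specialize (HE L g HL Hg). rewrite <- HHg in HE.
    specialize (HU m). fold H in HU.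
    assert (HLo := alt_lower (S k) m). fold H in HLo.
    set (A := alt_binom_sum (S (S k)) m) in *.
    set (F1 := INR (fact (S k))).
    assert (HF1 : 1 <= F1) by apply fact_ge1.
    assert (EF : INR (fact (S (S k))) = INR (S (S k)) * F1) by apply fact_S_R.
    rewrite EF in *.
    set (N := INR (S (S k))) in *.
    assert (HN : 1 <= N) by (apply (le_INR 1); lia).
    set (R0 := H ^ S (S k) - L ^ S (S k) - N * g * L ^ S k) in *.
    set (delta := A - H ^ S (S k) / (N * F1)).
    assert (Hid : A - L ^ S (S k) / (N * F1) - gam * L ^ S k / F1
                  = delta + R0 / (N * F1) + eps * L ^ S k / F1).
    { unfold delta, R0, eps. rewrite HHg. unfold g, eps. field. lra. }
    rewrite Hid.
    assert (HLk : 0 <= L ^ k) by (apply pow_le; lra).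
    assert (D1 : 0 <= delta) by (unfold delta; lra).
    assert (D2 : delta <= G * 4 ^ k * L ^ k).
    { assert ((H + 1) ^ k <= (4 * L) ^ k).
      { apply pow_incr. pose proof (harm_nonneg m). fold H in H0. lra. }
      rewrite Rpow_mult_distr in H0.
      assert (G * (H + 1) ^ k <= G * (4 ^ k * L ^ k)) by (apply Rmult_le_compat_l; lra).
      unfold delta. lra. }
    assert (D3 : Rabs (R0 / (N * F1)) <= K * L ^ k).
    { unfold Rdiv. rewrite Rabs_mult. rewrite (Rabs_pos_eq (/ (N * F1))).
      2:{ apply Rlt_le, Rinv_0_lt_compat. nra. }
      assert (/ (N * F1) <= 1). { rewrite <- Rinv_1. apply Rinv_le_contravar. lra. nra. }
      assert (0 <= / (N * F1)) by (apply Rlt_le, Rinv_0_lt_compat; nra).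
      assert (0 <= Rabs R0) by apply Rabs_pos.
      nra. }
    assert (D4 : Rabs (eps * L ^ S k / F1) <= L ^ k).
    { assert (0 < F1) by lra.
      rewrite Rabs_pos_eq.
      2:{ apply Rmult_le_pos. apply Rmult_le_pos. lra. simpl; nra. apply Rlt_le, Rinv_0_lt_compat; lra. }
      assert (Hm0 : 0 < INR m) by (apply lt_0_INR; lia).
      assert (eps * L <= 1).
      { apply (Rle_trans _ (/ INR m * INR m)). apply Rmult_le_compat; lra.
        rewrite Rinv_l; lra. }
      assert (eps * L ^ S k <= L ^ k). { simpl pow. nra. }
      apply (Rmult_le_reg_r F1). lra. unfold Rdiv. rewrite Rmult_assoc, Rinv_l by lra.
      assert (0 <= eps * L ^ S k) by (apply Rmult_le_pos; [lra|simpl; nra]).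
      nra. }
    eapply Rle_trans. apply Rabs_triang.
    eapply Rle_trans. apply Rplus_le_compat_r. apply Rabs_triang.
    rewrite (Rabs_pos_eq delta) by lra.
    assert (G * 4 ^ k * L ^ k + K * L ^ k + L ^ k = (G * 4 ^ k + K + 1) * L ^ k) by ring.
    lra.
Qed.
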